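(* Let $T$ be a decision tree of depth $d$ computing a Boolean function $f:\{-1,1\}^n\to\{0,1\}$, and let $p=\Pr_x[f(x)=1]$ for uniform $x\in\{-1,1\}^n$. Then $$\sum_{i=1}^n|\hat f(\{i\})|\ \le\ O\big(\sqrt d\cdot p\cdot\sqrt{\ln(e/p)}\big),$$ where $O(\cdot)$ hides a universal constant.
   Context: Fourier coefficients: $\hat f(S)=\mathbb E_{x}[f(x)\prod_{i\in S}x_i]$ for $x$ uniform on $\{-1,1\}^n$. *)

(* Defs.v *)
From HB Require Import structures.
From mathcomp Require Import all_boot all_order all_algebra.
From mathcomp Require Import reals sequences exp.
Set Implicit Arguments. Unset Strict Implicit. Unset Printing Implicit Defensive.
Import Order.TTheory GRing.Theory Num.Theory.
Local Open Scope ring_scope.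

(* The Boolean cube {-1,1}^n: a point is encoded as x : {ffun 'I_n -> bool},
   where the bit [true] stands for the coordinate value -1 and [false] for +1. *)
Definition cube (n : nat) := {ffun 'I_n -> bool}.

Definition sgn {R : ringType} (b : bool) : R := if b then -1 else 1.

(* Decision trees over the variables x_1..x_n with output in {0,1}.
   [Node i tm tp] queries x_i and continues with [tm] if x_i = -1,
   with [tp] if x_i = +1. *)
Inductive dtree (n : nat) : Type :=
  | Leaf of bool
  | Node of 'I_n & dtree n & dtree n.

Fixpoint depth n (T : dtree n) : nat :=
  match T with
  | Leaf _ => 0%N
  | Node _ tm tp => (maxn (depth tm) (depth tp)).+1
  end.

Fixpoint dt_eval n (T : dtree n) (x : cube n) : bool :=
  match T with
  | Leaf b => b
  | Node i tm tp => if x i then dt_eval tm x else dt_eval tp x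
  end.

Definition computed {R : ringType} n (T : dtree n) : cube n -> R :=
  fun x => (dt_eval T x)%:R.

Definition Ex {R : fieldType} n (g : cube n -> R) : R :=
  (2 ^+ n)^-1 * \sum_(x : cube n) g x.

Definition fourier {R : fieldType} n (f : cube n -> R) (S : {set 'I_n}) : R :=
  Ex (fun x => f x * \prod_(i in S) sgn (x i)).

Definition prob1 {R : fieldType} n (f : cube n -> R) : R :=
  Ex (fun x => if f x == 1 then 1 else 0).

(* Main.v *)
Require Import Defs.
From HB Require Import structures.
From mathcomp Require Import all_boot all_order all_algebra.
From mathcomp Require Import reals sequences exp.
From mathcomp Require Import ring lra.
Set Implicit Arguments. Unset Strict Implicit. Unset Printing Implicit Defensive.
Import Order.TTheory GRing.Theory Num.Theory.
Local Open Scope ring_scope.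

Definition pa n := {ffun 'I_n -> option bool}.
Definition consb n (r : pa n) (x : cube n) : bool :=
  [forall i, if r i is Some b then x i == b else true].
Definition upd n (r : pa n) (i : 'I_n) (b : bool) : pa n :=
  [ffun j => if j == i then Some b else r j].
Definition flip n (x : cube n) (j : 'I_n) : cube n :=
  [ffun k => if k == j then ~~ x k else x k].

Lemma flipK n (j : 'I_n) : involutive (fun x : cube n => flip x j).
Proof. by move=> x; apply/ffunP=> k; rewrite !ffunE; case: eqP => // ->; rewrite negbK. Qed.

Lemma consE n (r : pa n) x i b : consb r x -> r i = Some b -> x i = b.
Proof. by move=> /forallP /(_ i) + E; rewrite E => /eqP. Qed.


Lemma cons_flip n (r : pa n) x j : r j = None -> consb r (flip x j) = consb r x.
Proof.
move=> E; apply/forallP/forallP => H i; have := H i; rewrite !ffunE;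
  case: eqP => [->|//]; by rewrite E.
Qed.

Lemma cons_upd n (r : pa n) x i b : r i = None ->
  consb (upd r i b) x = consb r x && (x i == b).
Proof.
move=> E; apply/forallP/andP => [H|[/forallP H1 H2] j].
  split; last by have := H i; rewrite ffunE eqxx.
  apply/forallP=> j; have := H j; rewrite ffunE; case: eqP => // ->; by rewrite E.
by rewrite ffunE; case: eqP => [->|_] //; apply: H1.
Qed.

Lemma cons_upd_flip n (r : pa n) x i b : r i = None ->
  consb (upd r i b) (flip x i) = consb (upd r i (~~ b)) x.
Proof.
move=> E; rewrite !cons_upd // cons_flip // ffunE eqxx.
by case: (x i); case: b.
Qed.

Lemma sum_flip (R : realType) n (r : pa n) i b (G : cube n -> R) : r i = None ->
  \sum_(x | consb (upd r i b) x) G (flip x i) = \sum_(x | consb (upd r i (~~ b)) x) G x.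
Proof.
move=> E; rewrite (reindex_inj (can_inj (flipK i))) /=.
by apply: eq_big => x; rewrite ?flipK // cons_upd_flip.
Qed.

Lemma sum_sgn0 (R : realType) n (r : pa n) j : r j = None ->
  \sum_(x | consb r x) (sgn (x j) : R) = 0.
Proof.
move=> E; set S := (X in X = 0).
have : S = - S.
  rewrite {1}/S (reindex_inj (can_inj (flipK j))) /= -sumrN.
  apply: eq_big => x; first by rewrite cons_flip.
  by move=> _; rewrite ffunE eqxx /sgn; case: (x j); rewrite ?opprK.
lra.
Qed.

Lemma sum_split (R : realType) n (r : pa n) i (G : cube n -> R) : r i = None ->
  \sum_(x | consb r x) G x =
  \sum_(x | consb (upd r i true) x) G x + \sum_(x | consb (upd r i false) x) G x.
Proof.
move=> E; rewrite [LHS](bigID (fun x : cube n => x i)) /=; congr (_ + _); apply: eq_bigl => x;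
by rewrite cons_upd //; case: (x i).
Qed.
Fixpoint Mv {R : realType} n (s : 'I_n -> R) (r : pa n) (T : dtree n) (x : cube n) : R :=
  match T with
  | Leaf _ => 0
  | Node i a c =>
    match r i with
    | Some true => Mv s r a x
    | Some false => Mv s r c x
    | None => s i * sgn (x i) +
        (if x i then Mv s (upd r i true) a x else Mv s (upd r i false) c x)
    end
  end.

Definition fixed {R : realType} n (s : 'I_n -> R) (r : pa n) : R :=
  \sum_i s i * (if r i is Some b then sgn b else 0).
Definition ell {R : realType} n (s : 'I_n -> R) (x : cube n) : R :=
  \sum_i s i * sgn (x i).

Lemma sum_ell (R : realType) n (s : 'I_n -> R) (r : pa n) :
  \sum_(x | consb r x) ell s x = \sum_(x | consb r x) fixed s r.
Proof.
rewrite /ell /fixed exchange_big [RHS]exchange_big /=; apply: eq_bigr => i _.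
case E: (r i) => [b|].
  by apply: eq_bigr => x Hx; rewrite (consE Hx E).
by rewrite -mulr_sumr sum_sgn0 // mulr0 big1 // => x _; rewrite mulr0.
Qed.

Lemma fixed_upd (R : realType) n (s : 'I_n -> R) (r : pa n) i b : r i = None ->
  fixed s (upd r i b) = s i * sgn b + fixed s r.
Proof.
move=> E; rewrite /fixed (bigD1 i) //= ffunE eqxx; congr (_ + _).
rewrite [RHS](bigD1 i) //= E mulr0 add0r; apply: eq_bigr => j /negbTE nj.
by rewrite ffunE nj.
Qed.

Lemma consI n (r : pa n) i b x : r i = None -> consb (upd r i b) x -> x i = b.
Proof. by move=> E; rewrite cons_upd // => /andP[_ /eqP]. Qed.

Lemma claim1 (R : realType) n (s : 'I_n -> R) (T : dtree n) (r : pa n) :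
  \sum_(x | consb r x) computed T x * ell s x =
  \sum_(x | consb r x) computed T x * (Mv s r T x + fixed s r).
Proof.
elim: T r => [b|i a IHa c IHc] r.
  by rewrite /computed /= -!mulr_sumr sum_ell; congr (_ * _); apply: eq_bigr => x _; rewrite add0r.
case E: (r i) => [[]|].
- transitivity (\sum_(x | consb r x) computed a x * ell s x).
    by apply: eq_bigr => x Hx; rewrite /computed /= (consE Hx E).
  rewrite IHa; apply: eq_bigr => x Hx; by rewrite /computed /= E (consE Hx E).
- transitivity (\sum_(x | consb r x) computed c x * ell s x).
    by apply: eq_bigr => x Hx; rewrite /computed /= (consE Hx E).
  rewrite IHc; apply: eq_bigr => x Hx; by rewrite /computed /= E (consE Hx E).
rewrite !(sum_split _ E); congr (_ + _).
  transitivity (\sum_(x | consb (upd r i true) x) computed a x * ell s x).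
    by apply: eq_bigr => x Hx; rewrite /computed /= (consI E Hx).
  rewrite IHa; apply: eq_bigr => x Hx.
  by rewrite /computed /= E (consI E Hx) (fixed_upd _ _ E) addrCA addrA.
transitivity (\sum_(x | consb (upd r i false) x) computed c x * ell s x).
  by apply: eq_bigr => x Hx; rewrite /computed /= (consI E Hx).
rewrite IHc; apply: eq_bigr => x Hx.
by rewrite /computed /= E (consI E Hx) (fixed_upd _ _ E) addrCA addrA.
Qed.
Lemma ssgn_le1 (R : realType) (t : R) b : (t = 1 \/ t = -1) -> t * sgn b <= 1.
Proof. by case=> ->; case: b; rewrite /sgn; lra. Qed.

Lemma Mv_le (R : realType) n (s : 'I_n -> R) (hs : forall i, s i = 1 \/ s i = -1)
   (T : dtree n) (r : pa n) x : Mv s r T x <= (depth T)%:R.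
Proof.
elim: T r => [b|i a IHa c IHc] r /=; first by [].
have la : (depth a)%:R <= (maxn (depth a) (depth c))%:R :> R by rewrite ler_nat leq_maxl.
have lc : (depth c)%:R <= (maxn (depth a) (depth c))%:R :> R by rewrite ler_nat leq_maxr.
rewrite -natr1.
case: (r i) => [[]|].
- by apply: le_trans (IHa r) _; apply: le_trans la _; lra.
- by apply: le_trans (IHc r) _; apply: le_trans lc _; lra.
have h1 b := ssgn_le1 b (hs i).
case: (x i).
  by have := IHa (upd r i true); have := h1 true; have := la; lra.
by have := IHc (upd r i false); have := h1 false; have := lc; lra.
Qed.

Lemma claim2 (R : realType) n (s : 'I_n -> R) (hs : forall i, s i = 1 \/ s i = -1)
   (l K : R) (hK1 : 1 <= K) (hK : expR l + expR (- l) = 2 * K)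
   (T : dtree n) (r : pa n) :
  \sum_(x | consb r x) expR (l * Mv s r T x) <= K ^+ depth T * \sum_(x | consb r x) 1.
Proof.
elim: T r => [b|i a IHa c IHc] r /=.
  by rewrite expr0 mul1r; apply: ler_sum => x _; rewrite mulr0 expR0.
set D := maxn (depth a) (depth c).
have S0 r' : 0 <= \sum_(x | consb r' x) (1 : R) by apply: sumr_ge0 => x _; lra.
have Ka : K ^+ depth a <= K ^+ D by apply: ler_weXn2l => //; rewrite leq_maxl.
have Kc : K ^+ depth c <= K ^+ D by apply: ler_weXn2l => //; rewrite leq_maxr.
have KD : K ^+ D <= K ^+ D.+1 by apply: ler_weXn2l.
have K0 : 0 <= K ^+ D by apply: exprn_ge0; lra.
case E: (r i) => [[]|].
- apply: le_trans (IHa r) _; apply: ler_wpM2r => //; exact: le_trans Ka KD.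
- apply: le_trans (IHc r) _; apply: ler_wpM2r => //; exact: le_trans Kc KD.
rewrite !(sum_split _ E).
set S1 := \sum_(x | consb (upd r i true) x) (1 : R).
set S2 := \sum_(x | consb (upd r i false) x) (1 : R).
have eS : S2 = S1 by have := @sum_flip R n r i true (fun _ => 1) E; rewrite /S1 /S2 /= => ->.
have h1 : \sum_(x | consb (upd r i true) x) expR (l * (s i * sgn (x i) +
          (if x i then Mv s (upd r i true) a x else Mv s (upd r i false) c x)))
        = expR (l * (s i * sgn true)) * \sum_(x | consb (upd r i true) x) expR (l * Mv s (upd r i true) a x).
  by rewrite mulr_sumr; apply: eq_bigr => x Hx; rewrite (consI E Hx) mulrDr expRD.
have h2 : \sum_(x | consb (upd r i false) x) expR (l * (s i * sgn (x i) +
          (if x i then Mv s (upd r i true) a x else Mv s (upd r i false) c x)))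
        = expR (l * (s i * sgn false)) * \sum_(x | consb (upd r i false) x) expR (l * Mv s (upd r i false) c x).
  by rewrite mulr_sumr; apply: eq_bigr => x Hx; rewrite (consI E Hx) mulrDr expRD.
rewrite h1 h2.
have I1 : \sum_(x | consb (upd r i true) x) expR (l * Mv s (upd r i true) a x) <= K ^+ D * S1.
  apply: le_trans (IHa _) _; apply: ler_wpM2r; [exact: S0 | exact: Ka].
have I2 : \sum_(x | consb (upd r i false) x) expR (l * Mv s (upd r i false) c x) <= K ^+ D * S1.
  rewrite -eS; apply: le_trans (IHc _) _; apply: ler_wpM2r; [exact: S0 | exact: Kc].
have hsum : expR (l * (s i * sgn true)) + expR (l * (s i * sgn false)) = 2 * K.
  by rewrite /sgn; case: (hs i) => ->; rewrite ?(mulr1, mul1r, mulN1r, mulrN1, opprK); lra.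
apply: (@le_trans _ _ (expR (l * (s i * sgn true)) * (K ^+ D * S1) +
                           expR (l * (s i * sgn false)) * (K ^+ D * S1))).
  by apply: lerD; apply: ler_wpM2l => //; apply: expR_ge0.
rewrite eS exprS -mulrDl hsum.
have -> : 2 * K * (K ^+ D * S1) = K * K ^+ D * (S1 + S1) by ring.
by [].
Qed.
Lemma cosh_ge1 (R : realType) (l : R) : 1 <= (expR l + expR (- l)) / 2.
Proof. have := expR_ge1Dx l; have := expR_ge1Dx (- l); lra. Qed.

Lemma cosh_le (R : realType) (l : R) : 0 <= l -> l ^+ 2 <= 1 / 2 ->
  (expR l + expR (- l)) / 2 <= expR (2 * l ^+ 2).
Proof.
move=> l0 l2.
have ab : expR l * expR (- l) = 1 by rewrite -expRD subrr expR0.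
have ha := expR_ge1Dx l; have hb := expR_ge1Dx (- l).
have a0 := expR_gt0 l; have b0 := expR_gt0 (- l).
set a := expR l in ab ha a0 *; set b := expR (- l) in ab hb b0 *.
have h1 : a * (1 - l) <= 1.
  have : 0 <= a * (b - (1 - l)) by apply: mulr_ge0; lra.
  lra.
have h2 : b * (1 + l) <= 1.
  have : 0 <= b * (a - (1 + l)) by apply: mulr_ge0; lra.
  lra.
have l1 : l <= 1 by nra.
have h3 : (a + b) * (1 - l ^+ 2) <= 2.
  have e : (a + b) * (1 - l ^+ 2) = a * (1 - l) * (1 + l) + b * (1 + l) * (1 - l) by ring.
  rewrite e.
  have : a * (1 - l) * (1 + l) <= 1 + l by rewrite -{2}(mul1r (1 + l)); apply: ler_wpM2r; lra.
  have : b * (1 + l) * (1 - l) <= 1 - l by rewrite -{2}(mul1r (1 - l)); apply: ler_wpM2r; lra.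
  lra.
apply: le_trans (expR_ge1Dx _).
set u := l ^+ 2 in h3 l2 *.
have u0 : 0 <= u by rewrite /u; apply: exprn_ge0.
have X0 : 0 <= ((1 + 2 * u) - (a + b) / 2) * (1 - u) by nra.
have u1 : 0 < 1 - u by lra.
have : 0 <= (1 + 2 * u) - (a + b) / 2.
  by rewrite -(pmulr_lge0 _ u1).
lra.
Qed.

Lemma jensen (R : realType) (T : finType) (P : pred T) (g : T -> R) :
  0 < \sum_(x | P x) (1 : R) ->
  (\sum_(x | P x) (1 : R)) * expR ((\sum_(x | P x) g x) / \sum_(x | P x) (1 : R))
    <= \sum_(x | P x) expR (g x).
Proof.
set A := \sum_(x | P x) (1 : R); set G := \sum_(x | P x) g x => A0.
set c := G / A.
apply: le_trans (_ : _ <= \sum_(x | P x) expR c * (1 + (g x - c))) _; last first.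
  apply: ler_sum => x _.
  have -> : expR (g x) = expR c * expR (g x - c) by rewrite -expRD addrC subrK.
  by apply: ler_wpM2l; [exact: expR_ge0 | exact: expR_ge1Dx].
rewrite -mulr_sumr big_split /= sumrB.
have -> : \sum_(x | P x) c = c * A by rewrite /A mulr_sumr; apply: eq_bigr => x _; rewrite mulr1.
have -> : c * A = G by rewrite /c mulfVK // gt_eqF.
by rewrite -/A -/G subrr addr0 mulrC.
Qed.
Unset Implicit Arguments.
Theorem mainTheorem6 (R : realType) :
  exists C : R, 0 < C /\
    forall (n d : nat) (T : dtree n), depth T = d ->
      let f : cube n -> R := computed T in
      let p := prob1 f in
      \sum_(i < n) `| fourier f [set i] |
        <= C * Num.sqrt (d%:R) * p * Num.sqrt (ln (expR 1 / p)).
Proof.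
exists 3; split; first lra.
move=> n d T hd; cbv zeta.
set f := (computed T : cube n -> R); set p := prob1 f.
set N : R := 2 ^+ n.
have N0 : 0 < N by rewrite /N exprn_gt0.
set A := \sum_(x | dt_eval T x) (1 : R).
have hp : p = N^-1 * A.
  rewrite /p /prob1 /Ex /f /computed; congr (_ * _); rewrite [RHS]big_mkcond.
  apply: eq_bigr => x _; case: (dt_eval T x); rewrite /= ?eqxx //.
  by rewrite eq_sym oner_eq0.
have hall : \sum_(x : cube n) (1 : R) = N.
  by rewrite sumr_const card_ffun card_bool card_ord /N -natrX.
have A0 : 0 <= A by apply: sumr_ge0 => x _; lra.
have AN : A <= N.
  rewrite -hall /A big_mkcond /=; apply: ler_sum => x _; case: (dt_eval T x) => //; lra.
set s : 'I_n -> R := fun i => if 0 <= fourier f [set i] then 1 else -1.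
have hs : forall i, s i = 1 \/ s i = -1 by move=> i; rewrite /s; case: ifP; [left|right].
have hL : \sum_(i < n) `| fourier f [set i] | = \sum_(i < n) s i * fourier f [set i].
  apply: eq_bigr => i _; rewrite /s; case: ifP => h.
    by rewrite ger0_norm // mul1r.
  by rewrite ltr0_norm ?mulN1r // ltNge h.
have hF : \sum_(i < n) s i * fourier f [set i] = N^-1 * \sum_x f x * ell s x.
  rewrite /fourier /Ex -/N.
  transitivity (N^-1 * \sum_(i < n) \sum_x s i * (f x * sgn (x i))).
    rewrite mulr_sumr; apply: eq_bigr => i _; rewrite mulrCA mulr_sumr.
    by congr (_ * _); apply: eq_bigr => x _; rewrite big_set1.
  rewrite exchange_big /=; congr (_ * _); apply: eq_bigr => x _.
  rewrite /ell mulr_sumr; apply: eq_bigr => i _; ring.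
set r0 : pa n := [ffun _ => None].
have c0 x : consb r0 x = true by apply/forallP => i; rewrite ffunE.
have e1 (F : cube n -> R) : \sum_(x | consb r0 x) F x = \sum_x F x by apply: eq_bigl.
have fx0 : fixed s r0 = 0 by rewrite /fixed big1 // => i _; rewrite ffunE mulr0.
set Sm := \sum_(x | dt_eval T x) Mv s r0 T x.
have hM : \sum_x f x * ell s x = Sm.
  have := claim1 s T r0; rewrite !e1 => ->; rewrite /Sm [RHS]big_mkcond.
  apply: eq_bigr => x _; rewrite fx0 addr0 /f /computed.
  by case: (dt_eval T x); rewrite /= ?mul1r ?mul0r.
have Sd : Sm <= d%:R * A.
  rewrite /A mulr_sumr; apply: ler_sum => x _; rewrite mulr1 -hd; exact: Mv_le.
rewrite hL hF hM hp.
suff key : Sm <= 3 * Num.sqrt d%:R * A * Num.sqrt (ln (expR 1 / (N^-1 * A))).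
  have Ni : 0 <= N^-1 by rewrite invr_ge0 ltW.
  have := ler_wpM2l Ni key.
  set q := Num.sqrt (ln _); set u := Num.sqrt _.
  move=> h; apply: le_trans h _.
  by have -> : 3 * u * (N^-1 * A) * q = N^-1 * (3 * u * A * q) by ring.
rewrite -hp.
have [Az|Anz] := eqVneq A 0.
  by move: Sd; rewrite Az !(mulr0, mul0r).
have Apos : 0 < A by rewrite lt_neqAle eq_sym Anz A0.
have hpA : A = p * N by rewrite hp mulrAC mulVf ?mul1r // gt_eqF.
have p0 : 0 < p by rewrite hp mulr_gt0 // invr_gt0.
have p1 : p <= 1 by nra.
set L := ln (expR 1 / p).
have e0 := expR_gt0 (1 : R).
have eL : expR L = expR 1 / p by rewrite /L lnK // posrE divr_gt0.
have ep : expR 1 / p * p = expR 1 by rewrite mulfVK // gt_eqF.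
have ep0 : 0 <= expR 1 / p by rewrite divr_ge0 // ltW.
have L1 : 1 <= L by rewrite -ler_expR eL; nra.
set u := Num.sqrt d%:R; set v := Num.sqrt L.
have u0 : 0 <= u := sqrtr_ge0 _.
have hu : u ^+ 2 = d%:R by rewrite sqr_sqrtr // ler0n.
have hv : v ^+ 2 = L by rewrite sqr_sqrtr //; lra.
have v0 : 0 < v by rewrite sqrtr_gt0; lra.
case: (leP L (2 * d%:R)) => hLd; last first.
  have uv : u <= v by nra.
  have h1 : 0 <= u * (v - u) * A by rewrite mulr_ge0 // mulr_ge0 // subr_ge0.
  have h2 : 0 <= u * v * A by rewrite mulr_ge0 // mulr_ge0 // ltW.
  rewrite -hu in Sd; nra.
have d0 : 0 < d%:R :> R by lra.
have up : 0 < u by rewrite sqrtr_gt0.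
set l := v / (2 * u).
have l0 : 0 <= l by rewrite divr_ge0 // ?mulr_ge0 // ltW.
have hl : l * (2 * u) = v by rewrite mulfVK // gt_eqF // mulr_gt0.
have hl2 : l ^+ 2 * 4 * d%:R = L.
  rewrite -hu -hv -hl; ring.
have l2 : l ^+ 2 <= 1 / 2 by nra.
set K := (expR l + expR (- l)) / 2.
have hK1 : 1 <= K := cosh_ge1 l.
have hK : expR l + expR (- l) = 2 * K by rewrite /K; field.
have hKle : K <= expR (2 * l ^+ 2) := cosh_le l0 l2.
have Cl2 := claim2 hs hK1 hK T r0.
rewrite !e1 hall hd in Cl2.
have Kd : K ^+ d <= expR (d%:R * (2 * l ^+ 2)).
  rewrite expRM_natl; apply: lerXn2r => //; rewrite nnegrE; [lra | exact: expR_ge0].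
have Sub : \sum_(x | dt_eval T x) expR (l * Mv s r0 T x) <= \sum_x expR (l * Mv s r0 T x).
  rewrite [X in _ <= X](bigID (fun x => dt_eval T x)) /= lerDl.
  by apply: sumr_ge0 => x _; exact: expR_ge0.
have J := @jensen R (cube n) (fun x => dt_eval T x) (fun x => l * Mv s r0 T x) Apos.
rewrite -mulr_sumr -/A -/Sm in J.
set c := l * Sm / A in J.
set D := d%:R * (2 * l ^+ 2) in Kd.
have X1 : A * expR c <= expR D * N.
  apply: le_trans J _; apply: le_trans Sub _; apply: le_trans Cl2 _.
  by apply: ler_wpM2r => //; apply: ltW.
have X2 : p * expR c <= expR D.
  rewrite hpA in X1; have := expR_gt0 c; have := expR_gt0 D; nra.
have X3 : expR c <= expR (D + L).
  rewrite expRD eL.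
  have e1' : 1 <= expR (1 : R) by have := expR_ge1Dx (1 : R); lra.
  have := expR_gt0 c; have := expR_gt0 D; nra.
rewrite ler_expR in X3.
have hD : D = L / 2 by rewrite /D -hl2; field.
have hc : c * A = l * Sm by rewrite /c mulfVK // gt_eqF.
have X4 : l * Sm <= 3 / 2 * L * A by rewrite -hc; nra.
have X5 : v * Sm <= 3 * L * A * u.
  rewrite -hl; nra.
rewrite -hv in X5; nra.
Qed.
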